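(* Let $p\in\mathcal M_1^+$ with generating function $\psi(z)=\sum_{k\ge0}p_kz^k$, and let $\mathcal R_1(\psi)(z)=\sum_{k\ge0}\mathcal R_1(p)_kz^k$, where $\mathcal R_1(p)_i=\sum_{k,\ell\ge0,\ k+\ell\ge i}\frac{1+\min\{k,\ell,i,k+\ell-i\}}{(k+1)(\ell+1)}p_kp_\ell$. Then the radii of convergence satisfy $\rho(\mathcal R_1(\psi))\ge\rho(\psi)$.
   Context: $\mathcal M_1^+$ is the set of probability measures on $\mathbb N_0$, identified with nonnegative sequences summing to $1$. $\rho(f)$ denotes the radius of convergence of a power series $f$ around $0$. *)

(* Defs.v *)
From Stdlib Require Import Reals Arith.
From Coquelicot Require Import Coquelicot.
Open Scope R_scope.

(* p in M_1^+ : a probability measure on N_0, i.e. a nonnegative sequence summing to 1 *)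
Definition prob_seq (p : nat -> R) : Prop :=
  (forall k, 0 <= p k) /\ is_series p 1.

Definition R1_term (p : nat -> R) (i k l : nat) : R :=
  if (i <=? k + l)%nat then
    (1 + INR (Nat.min (Nat.min k l) (Nat.min i (k + l - i)))) /
      (INR (k + 1) * INR (l + 1)) * p k * p l
  else 0.

(* R_1(p)_i (R1coef) = sum over k,l >= 0 with k + l >= i (nonnegative terms, iterated sum) *)
Definition R1coef (p : nat -> R) (i : nat) : R :=
  Series (fun k => Series (fun l => R1_term p i k l)).

(* Main.v *)
Require Import Defs.
From Stdlib Require Import Reals.
From Coquelicot Require Import Coquelicot.
From Stdlib Require Import Lra Lia Psatz.

Lemma Series_nonneg (a : nat -> R) : (forall n, 0 <= a n) -> ex_series a -> 0 <= Series a.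
Proof.
  intros H He. replace 0 with (Series (fun n => 0 * a n)).
  apply Series_le; auto. intros n; split; [lra| rewrite Rmult_0_l; auto].
  rewrite Series_scal_l; ring.
Qed.

Lemma ex_series_cmp (a b : nat -> R) : (forall n, 0 <= a n <= b n) -> ex_series b -> ex_series a.
Proof.
  intros H He. apply (ex_series_le a b); auto. intros n.
  change (Rabs (a n) <= b n). rewrite Rabs_pos_eq; apply H.
Qed.

Lemma term_bound (p : nat -> R) (r : R) (i k l : nat) :
  (forall k, 0 <= p k) -> 1 <= r ->
  0 <= R1_term p i k l <= (p k * r ^ k) * (p l * r ^ l) / r ^ i.
Proof.
  intros hp hr. unfold R1_term.
  assert (Hri : 0 < r ^ i) by (apply pow_lt; lra).
  assert (Hk := hp k). assert (Hl := hp l).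
  assert (Hrk : 0 < r ^ k) by (apply pow_lt; lra).
  assert (Hrl : 0 < r ^ l) by (apply pow_lt; lra).
  destruct (Nat.leb_spec i (k + l)) as [Hi|Hi].
  - set (m := Nat.min (Nat.min k l) (Nat.min i (k + l - i))).
    assert (Hm : (m <= k)%nat) by (unfold m; lia).
    apply le_INR in Hm.
    assert (H0 : 0 <= INR m) by apply pos_INR.
    rewrite !plus_INR. simpl INR.
    assert (Hk0 := pos_INR k). assert (Hl0 := pos_INR l).
    assert (Hc : 0 <= (1 + INR m) / ((INR k + 1) * (INR l + 1)) <= 1).
    { split. apply Rdiv_le_0_compat; nra.
      apply Rmult_le_reg_r with ((INR k + 1) * (INR l + 1)). nra.
      unfold Rdiv. rewrite Rmult_assoc, Rinv_l by nra. nra. }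
    assert (Hpow : r ^ i <= r ^ k * r ^ l).
    { rewrite <- pow_add. replace (k + l)%nat with (i + (k + l - i))%nat by lia.
      rewrite pow_add. assert (1 <= r ^ (k + l - i)) by (apply pow_R1_Rle; lra). nra. }
    assert (Hpp : 0 <= p k * p l) by nra.
    split. nra.
    apply Rle_trans with (p k * p l).
    { replace ((1 + INR m) / ((INR k + 1) * (INR l + 1)) * p k * p l)
        with (((1 + INR m) / ((INR k + 1) * (INR l + 1))) * (p k * p l)) by ring. nra. }
    apply Rmult_le_reg_r with (r ^ i); auto.
    unfold Rdiv. rewrite (Rmult_assoc _ (/ r ^ i)), Rinv_l by lra.
    assert (0 <= p k * p l * (r ^ k * r ^ l - r ^ i)) by (apply Rmult_le_pos; lra). nra.
  - split. lra. apply Rdiv_le_0_compat; [apply Rmult_le_pos; apply Rmult_le_pos; lra | lra].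
Qed.

Lemma coef_bound (p : nat -> R) (r : R) (i : nat) :
  (forall k, 0 <= p k) -> 1 <= r -> ex_series (fun k => p k * r ^ k) ->
  0 <= R1coef p i <= Series (fun k => p k * r ^ k) * Series (fun k => p k * r ^ k) / r ^ i.
Proof.
  intros hp hr He. set (A := fun k => p k * r ^ k). set (S := Series A).
  assert (HA : forall k, 0 <= A k) by (intros k; unfold A; apply Rmult_le_pos; [auto| apply pow_le; lra]).
  assert (Hri : 0 < r ^ i) by (apply pow_lt; lra).
  assert (HS : 0 <= S) by (apply Series_nonneg; auto).
  assert (Hinner : forall k, ex_series (fun l => R1_term p i k l) /\
     0 <= Series (fun l => R1_term p i k l) <= A k * S / r ^ i).
  { intros k.
    assert (Hb : ex_series (fun l => (A k / r ^ i) * A l)).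
    { apply (ex_series_scal_l (A k / r ^ i) A). exact He. }
    assert (Hle : forall l, 0 <= R1_term p i k l <= (A k / r ^ i) * A l).
    { intros l. destruct (term_bound p r i k l hp hr) as [h1 h2]. split; auto.
      unfold A; unfold Rdiv in *; nra. }
    assert (Hex : ex_series (fun l => R1_term p i k l)) by (eapply ex_series_cmp; [exact Hle| exact Hb]).
    split; [exact Hex|]. split. apply Series_nonneg; [intros; apply Hle| exact Hex].
    apply (Rle_trans _ (Series (fun l => A k / r ^ i * A l))). apply Series_le; [exact Hle| exact Hb].
    rewrite (Series_scal_l (A k / r ^ i) A). unfold S, Rdiv. nra. }
  unfold R1coef.
  assert (Hb : ex_series (fun k => A k * (S / r ^ i))) by (apply ex_series_scal_r; exact He).
  assert (Hle : forall k, 0 <= Series (fun l => R1_term p i k l) <= A k * (S / r ^ i)).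
  { intros k. destruct (Hinner k) as [_ [h1 h2]]. split; auto. unfold Rdiv in *; nra. }
  split. apply Series_nonneg. intros; apply Hle. eapply ex_series_cmp; [exact Hle| exact Hb].
  apply (Rle_trans _ (Series (fun k => A k * (S / r ^ i)))). apply Series_le; [exact Hle| exact Hb].
  rewrite Series_scal_r. fold S. unfold Rdiv. nra.
Qed.

Lemma point_bound (p : nat -> R) (hp : prob_seq p) (x : R) :
  0 <= x -> Rbar_lt x (CV_radius p) -> Rbar_le x (CV_radius (R1coef p)).
Proof.
  intros hx hlt. destruct hp as [hp1 hp2].
  set (r := Rmax 1 x).
  assert (Hr1 : 1 <= r) by apply Rmax_l.
  assert (Hxr : x <= r) by apply Rmax_r.
  assert (He : ex_series (fun k => p k * r ^ k)).
  { unfold r. destruct (Rle_dec 1 x) as [h|h].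
    - rewrite Rmax_right by lra.
      assert (H := CV_disk_inside p x). rewrite Rabs_pos_eq in H by lra.
      specialize (H hlt). eapply ex_series_cmp; [|exact H].
      intros n. assert (0 <= p n * x ^ n) by (apply Rmult_le_pos; auto; apply pow_le; lra).
      cbv beta. rewrite Rabs_pos_eq; lra.
    - rewrite Rmax_left by lra. eapply ex_series_ext; [|exists 1; exact hp2].
      intros n; simpl. rewrite pow1; ring. }
  set (S := Series (fun k => p k * r ^ k)).
  apply (proj1 (CV_radius_bounded (R1coef p))).
  exists (S * S). intros n.
  destruct (coef_bound p r n hp1 Hr1 He) as [h1 h2]. fold S in h2.
  assert (Hrn : 0 < r ^ n) by (apply pow_lt; lra).
  assert (Hxn : 0 <= x ^ n <= r ^ n) by (split; [apply pow_le; lra| apply pow_incr; lra]).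
  rewrite Rabs_pos_eq by nra.
  apply Rle_trans with (S * S / r ^ n * r ^ n). nra.
  unfold Rdiv. rewrite Rmult_assoc, Rinv_l by lra. lra.
Qed.

Theorem lemma7 (p : nat -> R) (hp : prob_seq p) :
  Rbar_le (CV_radius p) (CV_radius (R1coef p)).
Proof.
  destruct (Rbar_le_lt_dec (CV_radius p) (CV_radius (R1coef p))) as [h|h]; auto.
  exfalso.
  assert (H0 := CV_radius_ge_0 (R1coef p)).
  destruct (CV_radius (R1coef p)) as [y| |] eqn:Ey; simpl in H0; try contradiction.
  - destruct (CV_radius p) as [z| |] eqn:Ez; simpl in h; try contradiction.
    + assert (Hx := point_bound p hp ((y + z) / 2)). rewrite Ez, Ey in Hx.
      simpl in Hx. assert ((y + z) / 2 <= y) by (apply Hx; lra). lra.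
    + assert (Hx := point_bound p hp (y + 1)). rewrite Ez, Ey in Hx.
      simpl in Hx. assert (y + 1 <= y) by (apply Hx; auto; lra). lra.
Qed.
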